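(* Let $\mathcal{T}$ be a finite or countably infinite set, let $\prec$ be a strict total order on $\mathcal{T}$, and let $\mathbf{p}, \mathbf{q}$ be probability distributions on $\mathcal{T}$. Let $\lhd$ denote the lexicographic order on $\mathcal{T} \times [0,1]$ induced by $(\mathcal{T},\prec)$ and $([0,1],<)$. Suppose that $\Pr[(X,U_1) \lhd (Y,U_0)] \ne 1/2$, where $Y \sim \mathbf{q}$, $X \sim \mathbf{p}$, and $U_0,U_1 \sim^{\mathrm{iid}} \mathrm{Uniform}(0,1)$ are mutually independent. For each positive integer $m$, let $X_0 \sim \mathbf{q}$, $X_1,\dots,X_m \sim^{\mathrm{iid}} \mathbf{p}$, $U_0,\dots,U_m \sim^{\mathrm{iid}} \mathrm{Uniform}(0,1)$ be mutually independent, and let $R = \sum_{j=1}^m \big(\mathbb{I}[X_j \prec X_0] + \mathbb{I}[X_j = X_0, U_j < U_0]\big)$. Then for all $m \ge 1$, $R$ is not uniformly distributed on $\{0,1,\dots,m\}$.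
   Context: The lexicographic order: $(x,u) \lhd (y,v)$ iff $x \prec y$, or $x = y$ and $u < v$. $\mathbb{I}[\cdot]$ denotes the indicator of an event. *)

(* Defs.v *)
From HB Require Import structures.
From mathcomp Require Import all_boot all_order all_algebra.
From mathcomp Require Import all_classical all_reals all_analysis.
Set Implicit Arguments. Unset Strict Implicit. Unset Printing Implicit Defensive.
Import Order.TTheory GRing.Theory Num.Theory.
Local Open Scope classical_set_scope.
Local Open Scope ring_scope.

Definition strict_total_order (T : eqType) (lt : rel T) : Prop :=
  (forall x, ~~ lt x x) /\
  (forall x y z, lt x y -> lt y z -> lt x z) /\
  (forall x y, x != y -> lt x y \/ lt y x).

Definition prob_distr (R : realType) (T : countType) (p : T -> R) : Prop :=
  (forall t, 0 <= p t) /\ (\esum_(t in [set: T]) (p t)%:E = 1)%E.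

Definition lexlt (R : realType) (T : eqType) (lt : rel T) (a b : T * R) : bool :=
  lt a.1 b.1 || ((a.1 == b.1) && (a.2 < b.2)).

(* Taking A_j = setT
   or B_j = setT recovers the product rule for every subfamily. *)
Definition mutually_indep (d : measure_display) (Ω : measurableType d)
  (R : realType) (P : probability Ω R) (T : Type) (m : nat)
  (X : nat -> Ω -> T) (U : nat -> Ω -> R) : Prop :=
  forall (A : nat -> set T) (B : nat -> set R),
    (forall j, measurable (B j)) ->
    P (\bigcap_(j in [set j | (j <= m)%N]) (X j @^-1` A j `&` U j @^-1` B j))
    = (\prod_(j < m.+1) (P (X j @^-1` A j) * P (U j @^-1` B j)))%E.

Definition rank_stat (R : realType) (T : eqType) (lt : rel T) (m : nat)
  (Xv : nat -> T) (Uv : nat -> R) : nat :=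
  (\sum_(1 <= j < m.+1)
     (lt (Xv j) (Xv 0%N) + ((Xv j == Xv 0%N) && (Uv j < Uv 0%N)%R)))%N.

(* Main.v *)
Require Import Defs.
From HB Require Import structures.
From mathcomp Require Import all_boot all_order all_algebra.
From mathcomp Require Import all_classical all_reals all_analysis.
From mathcomp Require Import measurable_realfun.
From mathcomp Require Import zify ring lra.
Import Order.TTheory GRing.Theory Num.Theory.
Local Open Scope classical_set_scope.
Local Open Scope ring_scope.
Set Implicit Arguments. Unset Strict Implicit. Unset Printing Implicit Defensive.

Section S.
Context (R : realType) (T : countType) (lt : rel T) (p q : T -> R) (m : nat)
  (d : measure_display) (Ω : measurableType d) (P : probability Ω R)
  (X : nat -> Ω -> T) (U : nat -> Ω -> R).
Hypothesis HX : forall j t, (j <= m)%N -> measurable (X j @^-1` [set t]).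
Hypothesis HU : forall j, (j <= m)%N -> measurable_fun setT (U j).
Hypothesis Hq : forall t, P (X 0%N @^-1` [set t]) = (q t)%:E.
Hypothesis Hp : forall j t, (1 <= j <= m)%N -> P (X j @^-1` [set t]) = (p t)%:E.
Hypothesis HUl : forall j (B : set R), (j <= m)%N -> measurable B ->
     P (U j @^-1` B) = lebesgue_measure (B `&` `[0, 1]%classic).
Hypothesis Hind : mutually_indep P m X U.

Lemma rect j a b B0 Bj : (1 <= j <= m)%N -> measurable B0 -> measurable Bj ->
  P (X j @^-1` [set a] `&` X 0%N @^-1` [set b] `&` U j @^-1` Bj `&` U 0%N @^-1` B0)
  = ((p a)%:E * lebesgue_measure (Bj `&` `[0%R, 1%R]%classic) *
     ((q b)%:E * lebesgue_measure (B0 `&` `[0%R, 1%R]%classic)))%E.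
Proof.
move=> /andP[j1 jm] mB0 mBj.
pose A i := if i == 0%N then [set b] else if i == j then [set a] else [set: T].
pose B i := if i == 0%N then B0 else if i == j then Bj else [set: R].
have mB i : measurable (B i) by rewrite /B; case: ifP => // _; case: ifP.
have j0 : (j == 0%N) = false by apply/negbTE; rewrite -lt0n.
have := Hind; rewrite /mutually_indep => /(_ A B mB).
have -> : \bigcap_(i in [set i | (i <= m)%N]) (X i @^-1` A i `&` U i @^-1` B i) =
   X j @^-1` [set a] `&` X 0%N @^-1` [set b] `&` U j @^-1` Bj `&` U 0%N @^-1` B0.
  apply/seteqP; split => w /=.
    move=> H; have [H0a H0b] := H 0%N isT; have [Hja Hjb] := H j jm.
    move: H0a H0b Hja Hjb; rewrite /A /B /= eqxx j0 /=.
    by move=> -> ? -> ?.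
  move=> [[[Hxa Hxb] Huj] Hu0] i _; rewrite /A /B /=.
  case: ifP => [/eqP ->//|_]; case: ifP => [/eqP ->//|_]; by [].
move=> ->.
rewrite (bigD1 ord0) //= (bigD1 (inord j)) /=; last by rewrite -val_eqE /= inordK ?ltnS // -lt0n.
rewrite big1 ?mule1; last first.
  move=> i /andP[i0 ij].
  have i0' : (val i == 0%N) = false by apply/negbTE.
  have ij' : (val i == j) = false.
    apply/negbTE; apply: contra ij => /eqP <-; apply/eqP/val_inj; rewrite /= inordK //.
  by rewrite /A /B i0' ij' !preimage_setT probability_setT mule1.
rewrite /A /B /= inordK ?ltnS // j0 eqxx.
rewrite Hq Hp ?j1 ?jm // !HUl //.
by rewrite muleC.
Qed.


Lemma pair_eq j a b (S : set (R * R)%type) : (1 <= j <= m)%N -> measurable S ->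
  P (X j @^-1` [set a] `&` X 0%N @^-1` [set b] `&` (fun w => (U 0%N w, U j w)) @^-1` S) =
  P (X 1%N @^-1` [set a] `&` X 0%N @^-1` [set b] `&` (fun w => (U 0%N w, U 1%N w)) @^-1` S).
Proof.
move=> jm mS.
have m1 : (1 <= 1 <= m)%N by case/andP: jm => j1 jm'; rewrite leqnn (leq_trans j1 jm').
have mA k : (1 <= k <= m)%N -> measurable (X k @^-1` [set a] `&` X 0%N @^-1` [set b]).
  by case/andP => _ km; apply: measurableI; apply: HX.
have mf k : (k <= m)%N -> measurable_fun setT (fun w => (U 0%N w, U k w)).
  by move=> km; apply: measurable_fun_pair; apply: HU.
have E k (mk : (1 <= k <= m)%N) :
  P (X k @^-1` [set a] `&` X 0%N @^-1` [set b] `&` (fun w => (U 0%N w, U k w)) @^-1` S)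
  = pushforward (mrestr P (mA k mk)) (fun w => (U 0%N w, U k w)) S.
  by rewrite /pushforward /mrestr setIC.
have mfj := mf j (proj2 (andP jm)).
have mf1 := mf 1%N (proj2 (andP m1)).
rewrite (E j jm) (E 1%N m1).
apply: (measure_unique [set A `*` B | A in measurable & B in measurable] (fun=> setT)) => //.
- exact: measurable_prod_measurableType.
- move=> _ _ [A1 mA1 [B1 mB1 <-]] [A2 mA2 [B2 mB2 <-]]; rewrite -setXI.
  exists (A1 `&` A2); first exact: measurableI.
  by exists (B1 `&` B2) => //; exact: measurableI.
- by move=> _; exists setT => //; exists setT => //; rewrite setXTT.
- by apply/seteqP; split => // x _; exists 0%N.
- move=> _ [B0 mB0 [Bj mBj <-]]; rewrite /= /pushforward /mrestr.
  have F k : (fun w => (U 0%N w, U k w)) @^-1` (B0 `*` Bj) `&`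
     (X k @^-1` [set a] `&` X 0%N @^-1` [set b]) =
     X k @^-1` [set a] `&` X 0%N @^-1` [set b] `&` U k @^-1` Bj `&` U 0%N @^-1` B0.
    by apply/seteqP; split => w /=; tauto.
  by rewrite !F !rect.
- move=> _; rewrite /= /pushforward /mrestr.
  apply: (@le_lt_trans _ _ 1%E); last exact: ltey.
  apply: probability_le1.
  by rewrite preimage_setT setTI; apply: measurableI; apply: HX; case/andP: jm.
Qed.


Definition L j := [set w | lexlt lt (X j w, U j w) (X 0%N w, U 0%N w)].

Definition Sab (a b : T) : set (R * R)%type :=
  if lt a b then setT else if a == b then [set z | z.2 < z.1] else set0.

Lemma measurable_Sab a b : measurable (Sab a b).
Proof.
rewrite /Sab; case: ifP => // _; case: ifP => // _.
have H : measurable_fun setT (fun z : (R * R)%type => z.2 < z.1).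
  exact: measurable_fun_ltr measurable_snd measurable_fst.
rewrite (_ : [set z | z.2 < z.1] = setT `&` (fun z : (R * R)%type => z.2 < z.1) @^-1` [set true]).
  exact: H.
by apply/seteqP; split => z /=; [move=> ->|move=> [_ ->]].
Qed.

Lemma DL k a b : X k @^-1` [set a] `&` X 0%N @^-1` [set b] `&` L k =
  X k @^-1` [set a] `&` X 0%N @^-1` [set b] `&` (fun w => (U 0%N w, U k w)) @^-1` Sab a b.
Proof.
apply/seteqP; split => w /= [[Ha Hb]]; rewrite /L /lexlt /Sab /= Ha Hb => H;
  (split; [by []|]).
  by case: (lt a b) H => //=; case: (a == b) => //.
by case: (lt a b) H => //=; case: (a == b) => //.
Qed.

Lemma L_eq j : (1 <= j <= m)%N -> P (L j) = P (L 1%N).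
Proof.
move=> jm.
have m1 : (1 <= 1 <= m)%N by case/andP: jm => j1 jm'; rewrite leqnn (leq_trans j1 jm').
pose D k n := if @pickle_inv (T * T)%type n is Some ab then
  X k @^-1` [set ab.1] `&` X 0%N @^-1` [set ab.2] `&` L k else set0.
have DE k n : D k n = if @pickle_inv (T * T)%type n is Some ab then
  X k @^-1` [set ab.1] `&` X 0%N @^-1` [set ab.2] `&`
  (fun w => (U 0%N w, U k w)) @^-1` Sab ab.1 ab.2 else set0.
  by rewrite /D; case: pickle_inv => // -[a b]; rewrite DL.
have mD k n : (1 <= k <= m)%N -> measurable (D k n).
  move=> /andP[_ km]; rewrite DE; case: pickle_inv => // -[a b] /=.
  apply: measurableI; first by apply: measurableI; apply: HX.
  rewrite -[X in measurable X]setTI.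
  have mf := measurable_fun_pair (HU (leq0n m)) (HU km).
  apply: mf => //; exact: measurable_Sab.
have LD k : L k = \bigcup_(n in setT) D k n.
  apply/seteqP; split => w.
    move=> Lw; exists (pickle (X k w, X 0%N w)) => //.
    by rewrite /D pickleK_inv /=.
  by move=> [n _]; rewrite /D; case: pickle_inv => // -[a b] [].
have tD k : trivIset setT (D k).
  apply/trivIsetP => i i' _ _ ii'; apply/seteqP; split => // w [].
  rewrite /D.
  case E1: (pickle_inv i) => [[a b]|] //; case E2: (pickle_inv i') => [[a' b']|] // /=.
  move=> [[Ha Hb] _] [[Ha' Hb'] _]; move/eqP: ii'; apply.
  have := @pickle_invK (T * T)%type i; have := @pickle_invK (T * T)%type i'.
  by rewrite E1 E2 /= -Ha -Hb -Ha' -Hb' => <- <-.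
rewrite (LD j) (LD 1%N) !measure_bigcup //; last by move=> n _; exact: mD.
  apply: eq_eseriesr => n _; rewrite !DE; case: pickle_inv => // -[a b] /=.
  apply: pair_eq => //; exact: measurable_Sab.
by move=> n _; exact: mD.
Qed.


Lemma mL k : (1 <= k <= m)%N -> measurable (L k).
Proof.
move=> /andP[_ km].
pose D n := if @pickle_inv (T * T)%type n is Some ab then
  X k @^-1` [set ab.1] `&` X 0%N @^-1` [set ab.2] `&`
  (fun w => (U 0%N w, U k w)) @^-1` Sab ab.1 ab.2 else set0.
have -> : L k = \bigcup_(n in setT) D n.
  apply/seteqP; split => w.
    move=> Lw; exists (pickle (X k w, X 0%N w)) => //.
    rewrite /D pickleK_inv.
    by move: (DL k (X k w) (X 0%N w)) => /seteqP [H _]; apply: H.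
  move=> [n _]; rewrite /D; case: pickle_inv => // -[a b] Hw.
  by move: (DL k a b) => /seteqP [_ H]; have [] := H w Hw.
apply: bigcup_measurable => n _; rewrite /D; case: pickle_inv => // -[a b] /=.
apply: measurableI; first by apply: measurableI; apply: HX.
rewrite -[X in measurable X]setTI.
have mf := measurable_fun_pair (HU (leq0n m)) (HU km).
apply: mf => //; exact: measurable_Sab.
Qed.


Definition r w := rank_stat lt m (fun j => X j w) (fun j => U j w).

Lemma rL (irr : forall x, ~~ lt x x) w : (r w)%:R = \sum_(i < m) \1_(L i.+1) w :> R.
Proof.
rewrite /r /rank_stat big_add1 /= big_mkord natr_sum; apply: eq_bigr => i _.
rewrite indicE.
rewrite (_ : (w \in L i.+1) = lexlt lt (X i.+1 w, U i.+1 w) (X 0%N w, U 0%N w)); last first.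
  by apply/idP/idP; [move/set_mem | move=> H; exact: mem_set].
rewrite /lexlt /=.
by case: (X i.+1 w =P X 0%N w) => [->|_]; [rewrite (negbTE (irr _))|rewrite andFb addn0 orbF].
Qed.

Lemma integral1 (irr : forall x, ~~ lt x x) :
  (\int[P]_(w in setT) ((r w)%:R)%:E = \sum_(i < m) P (L i.+1))%E.
Proof.
under eq_integral => w _ do rewrite rL // -sumEFin.
rewrite ge0_integral_sum //.
- apply: eq_bigr => i _; rewrite integral_indic ?setIT //; apply: mL; by rewrite ltn_ord.
- move=> i; apply/measurable_EFinP; apply: measurable_indic; apply: mL; by rewrite ltn_ord.
Qed.


Definition Rk (k : nat) := [set w | r w = k].

Lemma r_le (irr : forall x, ~~ lt x x) w : (r w <= m)%N.
Proof.
rewrite -(ler_nat R) rL //.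
rewrite (_ : m%:R = \sum_(i < m) (1 : R)); last by rewrite sumr_const card_ord.
by apply: ler_sum => i _; rewrite indicE; case: (_ \in _).
Qed.

Lemma mRk (irr : forall x, ~~ lt x x) k : measurable (Rk k).
Proof.
have mf : measurable_fun setT (fun w => (r w)%:R : R).
  rewrite (_ : (fun w => (r w)%:R) = (fun w => \sum_(i <- index_enum 'I_m) \1_(L i.+1) w)).
    apply: measurable_sum => i; apply: measurable_indic; apply: mL; by rewrite ltn_ord.
  by apply/funext => w; rewrite rL.
rewrite (_ : Rk k = setT `&` (fun w => (r w)%:R : R) @^-1` [set k%:R]).
  by apply: mf => //; exact: measurable_set1.
apply/seteqP; split => w /=; rewrite /Rk /=.
  by move=> ->.
by move=> [_ /eqP]; rewrite eqr_nat => /eqP.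
Qed.

Lemma integral2 (irr : forall x, ~~ lt x x) :
  (\int[P]_(w in setT) ((r w)%:R)%:E = \sum_(k < m.+1) (k%:R)%:E * P (Rk k))%E.
Proof.
have pw w : (((r w)%:R)%:E = \sum_(k < m.+1) (k%:R)%:E * (\1_(Rk k) w)%:E :> \bar R)%E.
  rewrite (bigD1 (inord (r w))) //= big1 ?adde0.
    by rewrite inordK ?ltnS ?r_le // indicE mem_set //= mule1.
  move=> k kr; rewrite indicE memNset ?mule0 //; rewrite /Rk /= => rk.
  by move/eqP: kr; apply; apply/val_inj; rewrite /= rk inordK.
under eq_integral => w _ do rewrite pw.
rewrite ge0_integral_sum //.
- apply: eq_bigr => k _; rewrite ge0_integralZl //.
  + by rewrite integral_indic ?setIT //; exact: mRk.
  + by apply/measurable_EFinP; apply: measurable_indic; exact: mRk.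
- move=> k; apply: measurable_funeM.
  by apply/measurable_EFinP; apply: measurable_indic; exact: mRk.
Qed.


Lemma tri n : (\sum_(k < n.+1) (k%:R : R)) * 2 = n%:R * n.+1%:R.
Proof.
elim: n => [|n IH]; first by rewrite big_ord_recr big_ord0 /= addr0 !mul0r.
rewrite big_ord_recr /= mulrDl IH -[2]/(2%:R) -!natrM -natrD; congr (_%:R).
by lia.
Qed.

Lemma main (irr : forall x, ~~ lt x x) (m1 : (1 <= m)%N)
  (Hne : P (L 1%N) <> (1 / 2)%:E) :
  ~ (forall k : nat, (k <= m)%N -> P (Rk k) = (1 / m.+1%:R)%:E).
Proof.
move=> Hu.
have e1 := integral1 irr; rewrite integral2 // in e1.
rewrite (eq_bigr (fun k : 'I_m.+1 => (k%:R / m.+1%:R)%:E)) in e1; last first.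
  by move=> k _; rewrite Hu; [rewrite -EFinM mul1r | rewrite -ltnS ltn_ord].
rewrite [X in _ = X](eq_bigr (fun _ => P (L 1%N))) in e1; last first.
  by move=> i _; apply: L_eq; rewrite ltn_ord.
have P0 : (0 <= P (L 1%N))%E by apply: measure_ge0; apply: mL; rewrite leqnn m1.
have P1 : (P (L 1%N) <= 1)%E by apply: probability_le1; apply: mL; rewrite leqnn m1.
move: e1 P0 P1 Hne; case: (P (L 1%N)) => [y| |]; last 2 first.
- by [].
- by [].
move=> e1 _ _; rewrite sumEFin sumEFin sumr_const card_ord in e1.
case: e1 => e1; apply; congr (_%:E).
rewrite -mulr_suml in e1.
have t := tri m.
have m0 : (m%:R : R) != 0 by rewrite pnatr_eq0 -lt0n.
have m10 : (m.+1%:R : R) != 0 by rewrite pnatr_eq0.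
have two0 : (2 : R) != 0 by rewrite pnatr_eq0.
have s : \sum_(i < m.+1) (i%:R : R) = m%:R * m.+1%:R / 2 by rewrite -t mulfK.
rewrite s in e1.
have e2 : y * m%:R = m%:R / 2 by rewrite mulr_natr -e1; field.
by apply: (mulIf m0); rewrite e2; field.
Qed.


End S.

Unset Implicit Arguments.
Set Strict Implicit.
Set Printing Implicit Defensive.

Theorem corollary3p5 (R : realType) (T : countType) (lt : rel T)
  (p q : T -> R) (m : nat)
  (d : measure_display) (Ω : measurableType d) (P : probability Ω R)
  (X : nat -> Ω -> T) (U : nat -> Ω -> R) :
  strict_total_order lt ->
  prob_distr p -> prob_distr q ->
  (1 <= m)%N ->
  (* measurability of the random variables *)
  (forall j t, (j <= m)%N -> measurable (X j @^-1` [set t])) ->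
  (forall j, (j <= m)%N -> measurable_fun setT (U j)) ->
  (* laws: X_0 ~ q, X_1..X_m ~ p, U_0..U_m ~ Uniform(0,1) *)
  (forall t, P (X 0%N @^-1` [set t]) = (q t)%:E) ->
  (forall j t, (1 <= j <= m)%N -> P (X j @^-1` [set t]) = (p t)%:E) ->
  (forall j (B : set R), (j <= m)%N -> measurable B ->
     P (U j @^-1` B) = lebesgue_measure (B `&` `[0, 1]%classic)) ->
  (* mutual independence *)
  mutually_indep P m X U ->
  (* hypothesis: Pr[(X_1,U_1) <| (X_0,U_0)] <> 1/2 *)
  P [set w | lexlt lt (X 1%N w, U 1%N w) (X 0%N w, U 0%N w)] <> (1 / 2)%:E ->
  (* conclusion: R is not uniform on {0,...,m} *)
  ~ (forall k : nat, (k <= m)%N ->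
       P [set w | rank_stat lt m (fun j => X j w) (fun j => U j w) = k]
       = (1 / m.+1%:R)%:E).
Proof.
move=> [irr _] _ _ m1 HX HU Hq Hp HUl Hind Hne.
exact: (main HX HU Hq Hp HUl Hind irr m1 Hne).
Qed.
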